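(* Let $A$ (in $\mathcal H$) and $B$ (in $\mathcal K$) be densely defined operators and suppose $A\dashv B$ with (possibly unbounded) intertwining operator $T$. If the resolvent set $\rho(A)$ is nonempty, then $T$ is bounded (and everywhere defined).
   Context: A closed densely defined operator $T:D(T)\subseteq\mathcal H\to\mathcal K$ is an intertwining operator for $A$ and $B$ if (io0) $D(A)\subseteq D(T)$ and $A\xi\in D(T)$ for all $\xi\in D(A)$ (i.e. $D(TA)=D(A)$); (io1) $TD(A)\subseteq D(B)$; (io2) $BT\xi=TA\xi$ for all $\xi\in D(A)$. $A\dashv B$ (quasi-similarity) means there is such an intertwining operator $T$ which is injective with densely defined inverse $T^{-1}$. $\rho(A)$ is the set of $\lambda\in\mathbb C$ such that $A-\lambda I$ is injective with bounded everywhere defined inverse. *)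

(* Defs.v *)
From Stdlib Require Import Reals.
Open Scope R_scope.

Record Cplx := mkC { re : R ; im : R }.
Definition C0 : Cplx := mkC 0 0.
Definition C1 : Cplx := mkC 1 0.
Definition Cadd (a b : Cplx) : Cplx := mkC (re a + re b) (im a + im b).
Definition Cmul (a b : Cplx) : Cplx :=
  mkC (re a * re b - im a * im b) (re a * im b + im a * re b).
Definition Cconj (a : Cplx) : Cplx := mkC (re a) (- im a).

Record HilbertSpace := {
  hcar :> Type;
  vzero : hcar;
  vadd : hcar -> hcar -> hcar;
  vopp : hcar -> hcar;
  vscal : Cplx -> hcar -> hcar;
  inner : hcar -> hcar -> Cplx;
  vaddA : forall x y z, vadd x (vadd y z) = vadd (vadd x y) z;
  vaddC : forall x y, vadd x y = vadd y x;
  vadd0 : forall x, vadd x vzero = x;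
  vaddN : forall x, vadd x (vopp x) = vzero;
  vscalA : forall a b x, vscal a (vscal b x) = vscal (Cmul a b) x;
  vscal1 : forall x, vscal C1 x = x;
  vscalDv : forall a x y, vscal a (vadd x y) = vadd (vscal a x) (vscal a y);
  vscalDs : forall a b x, vscal (Cadd a b) x = vadd (vscal a x) (vscal b x);
  (* inner product axioms (linear in the first argument) *)
  innerDl : forall x y z, inner (vadd x y) z = Cadd (inner x z) (inner y z);
  innerZl : forall a x y, inner (vscal a x) y = Cmul a (inner x y);
  innerC : forall x y, inner y x = Cconj (inner x y);
  inner_ge0 : forall x, 0 <= re (inner x x);
  inner_eq0 : forall x, inner x x = C0 -> x = vzero;
  hcomplete : forall u : nat -> hcar,
    (forall eps, 0 < eps -> exists N, forall n m, (n >= N)%nat -> (m >= N)%nat ->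
        sqrt (re (inner (vadd (u n) (vopp (u m))) (vadd (u n) (vopp (u m))))) < eps) ->
    exists l, forall eps, 0 < eps -> exists N, forall n, (n >= N)%nat ->
        sqrt (re (inner (vadd (u n) (vopp l)) (vadd (u n) (vopp l)))) < eps
}.

Arguments vzero {h}.
Arguments vadd {h}.
Arguments vopp {h}.
Arguments vscal {h}.
Arguments inner {h}.

Definition vsub {H : HilbertSpace} (x y : H) : H := vadd x (vopp y).
Definition hnorm {H : HilbertSpace} (x : H) : R := sqrt (re (inner x x)).

Definition converges_to {H : HilbertSpace} (u : nat -> H) (l : H) : Prop :=
  forall eps, 0 < eps -> exists N, forall n, (n >= N)%nat -> hnorm (vsub (u n) l) < eps.

Definition dense {H : HilbertSpace} (S : H -> Prop) : Prop :=
  forall x eps, 0 < eps -> exists y, S y /\ hnorm (vsub x y) < eps.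

(** * Partially defined operators: a domain and an action (meaningful on the domain) *)
Record Op (H K : HilbertSpace) := mkOp { dom : H -> Prop ; app : H -> K }.
Arguments dom {H K}.
Arguments app {H K}.

Definition is_linop {H K : HilbertSpace} (T : Op H K) : Prop :=
  dom T vzero /\
  (forall x y, dom T x -> dom T y -> dom T (vadd x y) /\
      app T (vadd x y) = vadd (app T x) (app T y)) /\
  (forall a x, dom T x -> dom T (vscal a x) /\ app T (vscal a x) = vscal a (app T x)).

Definition densely_defined {H K : HilbertSpace} (T : Op H K) : Prop :=
  is_linop T /\ dense (dom T).

Definition closed_op {H K : HilbertSpace} (T : Op H K) : Prop :=
  forall (u : nat -> H) (x : H) (y : K),
    (forall n, dom T (u n)) -> converges_to u x ->
    converges_to (fun n => app T (u n)) y ->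
    dom T x /\ app T x = y.

Definition intertwining {H K : HilbertSpace} (T : Op H K) (A : Op H H) (B : Op K K) : Prop :=
  closed_op T /\ densely_defined T /\
  (forall xi, dom A xi -> dom T xi /\ dom T (app A xi)) /\     (* io0 *)
  (forall xi, dom A xi -> dom B (app T xi)) /\                  (* io1 *)
  (forall xi, dom A xi -> app B (app T xi) = app T (app A xi)).  (* io2 *)

(** range of T, i.e. the domain of T^{-1} *)
Definition range {H K : HilbertSpace} (T : Op H K) (y : K) : Prop :=
  exists x, dom T x /\ app T x = y.

(** A ⊣ B via T: T intertwining, injective, with densely defined inverse *)
Definition quasi_similar_via {H K : HilbertSpace} (T : Op H K) (A : Op H H) (B : Op K K) : Prop :=
  intertwining T A B /\
  (forall x y, dom T x -> dom T y -> app T x = app T y -> x = y) /\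
  dense (range T).

Definition quasi_similar {H K : HilbertSpace} (A : Op H H) (B : Op K K) : Prop :=
  exists T : Op H K, quasi_similar_via T A B.

Definition in_resolvent {H : HilbertSpace} (A : Op H H) (lam : Cplx) : Prop :=
  (forall x y, dom A x -> dom A y ->
     vsub (app A x) (vscal lam x) = vsub (app A y) (vscal lam y) -> x = y) /\
  exists Rl : H -> H,
    (forall y, dom A (Rl y) /\ vsub (app A (Rl y)) (vscal lam (Rl y)) = y) /\
    (exists M, forall y, hnorm (Rl y) <= M * hnorm y).

Definition everywhere_defined {H K : HilbertSpace} (T : Op H K) : Prop :=
  forall x, dom T x.

Definition bounded_op {H K : HilbertSpace} (T : Op H K) : Prop :=
  exists M, forall x, dom T x -> hnorm (app T x) <= M * hnorm x.

(* Main.v *)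
Require Import Defs.
From Stdlib Require Import Reals Lra Lia Arith.
From Stdlib Require Import IndefiniteDescription Classical.
Open Scope R_scope.

Definition m1 : Cplx := mkC (-1) 0.
Definition rs (t : R) : Cplx := mkC t 0.
Definition ri {V : HilbertSpace} (x y : V) : R := re (inner x y).

Lemma vadd0l {V : HilbertSpace} (x : V) : vadd vzero x = x.
Proof. rewrite vaddC; apply vadd0. Qed.

Lemma vscal_C0 {V : HilbertSpace} (x : V) : vscal Defs.C0 x = vzero.
Proof.
  assert (e : vscal Defs.C0 x = vadd (vscal Defs.C0 x) (vscal Defs.C0 x)).
  { rewrite <- vscalDs. f_equal. unfold Cadd, Defs.C0; simpl. f_equal; ring. }
  rewrite <- (vaddN _ (vscal Defs.C0 x)). rewrite e at 2.
  rewrite <- vaddA, vaddN, vadd0. reflexivity.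
Qed.

Lemma vopp_scal {V : HilbertSpace} (x : V) : vopp x = vscal m1 x.
Proof.
  assert (e : vadd (vscal m1 x) x = vzero).
  { rewrite <- (vscal1 _ x) at 2. rewrite <- vscalDs.
    rewrite <- (vscal_C0 x). f_equal. unfold Cadd, Defs.C0, Defs.C1, m1; simpl. f_equal; ring. }
  rewrite <- (vadd0l (vopp x)). rewrite <- e. rewrite <- vaddA, vaddN, vadd0. reflexivity.
Qed.

Lemma vopp_add {V : HilbertSpace} (x y : V) : vopp (vadd x y) = vadd (vopp x) (vopp y).
Proof. rewrite !vopp_scal. apply vscalDv. Qed.

Lemma vopp_opp {V : HilbertSpace} (x : V) : vopp (vopp x) = x.
Proof. rewrite !vopp_scal, vscalA.
  transitivity (vscal Defs.C1 x); [|apply vscal1]. f_equal. unfold Cmul, Defs.C1, m1; simpl; f_equal; ring. Qed.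

Lemma vaddNl {V : HilbertSpace} (x : V) : vadd (vopp x) x = vzero.
Proof. rewrite vaddC; apply vaddN. Qed.

Lemma ri_addl {V : HilbertSpace} (x y z : V) : ri (vadd x y) z = ri x z + ri y z.
Proof. unfold ri; rewrite innerDl; reflexivity. Qed.
Lemma ri_sym {V : HilbertSpace} (x y : V) : ri x y = ri y x.
Proof. unfold ri; rewrite (innerC _ x y); reflexivity. Qed.
Lemma ri_scall {V : HilbertSpace} t (x y : V) : ri (vscal (rs t) x) y = t * ri x y.
Proof. unfold ri; rewrite innerZl; simpl; ring. Qed.
Lemma ri_addr {V : HilbertSpace} (x y z : V) : ri z (vadd x y) = ri z x + ri z y.
Proof. rewrite !(ri_sym z); apply ri_addl. Qed.
Lemma ri_scalr {V : HilbertSpace} t (x y : V) : ri y (vscal (rs t) x) = t * ri y x.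
Proof. rewrite !(ri_sym y); apply ri_scall. Qed.
Lemma ri_ge0 {V : HilbertSpace} (x : V) : 0 <= ri x x.
Proof. apply inner_ge0. Qed.

Lemma hnorm_ri {V : HilbertSpace} (x : V) : hnorm x = sqrt (ri x x).
Proof. reflexivity. Qed.
Lemma hnorm_ge0 {V : HilbertSpace} (x : V) : 0 <= hnorm x.
Proof. apply sqrt_pos. Qed.

Lemma norm_scal {V : HilbertSpace} t (x : V) : hnorm (vscal (rs t) x) = Rabs t * hnorm x.
Proof.
  rewrite !hnorm_ri, ri_scall, ri_scalr.
  replace (t * (t * ri x x)) with (Rsqr t * ri x x) by (unfold Rsqr; ring).
  rewrite sqrt_mult. rewrite sqrt_Rsqr_abs; reflexivity.
  apply Rle_0_sqr. apply ri_ge0.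
Qed.

Lemma norm_opp {V : HilbertSpace} (x : V) : hnorm (vopp x) = hnorm x.
Proof. rewrite vopp_scal. change m1 with (rs (-1)). rewrite norm_scal.
  replace (Rabs (-1)) with 1 by (unfold Rabs; destruct Rcase_abs; lra). ring. Qed.

Lemma norm_zero {V : HilbertSpace} : hnorm (@vzero V) = 0.
Proof. rewrite <- (vscal_C0 vzero). change Defs.C0 with (rs 0). rewrite norm_scal, Rabs_R0; ring. Qed.

Lemma quad a b c : 0 <= a -> 0 <= c -> (forall t, 0 <= a + 2*t*b + t*t*c) ->
  b <= sqrt a * sqrt c.
Proof.
  intros Ha Hc Q.
  assert (bb : b*b <= a*c).
  { destruct (Rle_lt_or_eq_dec 0 c Hc) as [cp|c0].
    - specialize (Q (-b/c)).
      assert (e : a + 2*(-b/c)*b + (-b/c)*(-b/c)*c = (a*c - b*b)/c) by (field; lra).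
      rewrite e in Q.
      assert (0 <= (a*c-b*b)/c * c) by (apply Rmult_le_pos; lra).
      replace ((a*c-b*b)/c*c) with (a*c-b*b) in H by (field; lra). lra.
    - subst c. destruct (Req_dec b 0) as [b0|bn].
      + subst; nra.
      + specialize (Q (-(a+1)/(2*b))).
        replace (a + 2 * (- (a + 1) / (2 * b)) * b + - (a + 1) / (2 * b) * (- (a + 1) / (2 * b)) * 0)
          with (-1) in Q by (field; auto). lra. }
  destruct (Rle_or_lt b 0).
  - pose proof (sqrt_pos a); pose proof (sqrt_pos c). nra.
  - rewrite <- sqrt_mult by auto. rewrite <- (sqrt_square b) by lra.
    apply sqrt_le_1_alt; auto.
Qed.

Lemma CS {V : HilbertSpace} (x y : V) : ri x y <= hnorm x * hnorm y.
Proof.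
  apply quad; try apply ri_ge0.
  intro t. pose proof (ri_ge0 (vadd x (vscal (rs t) y))) as G.
  rewrite ri_addl, !ri_addr, !ri_scall, !ri_scalr in G.
  rewrite (ri_sym y x) in G. change (0 <= ri x x + 2*t*ri x y + t*t*ri y y). replace (ri x x + 2*t*ri x y + t*t*ri y y) with (ri x x + t * ri x y + (t * ri x y + t * (t * ri y y))) by ring. exact G.
Qed.

Lemma vtriangle {V : HilbertSpace} (x y : V) : hnorm (vadd x y) <= hnorm x + hnorm y.
Proof.
  rewrite hnorm_ri, ri_addl, !ri_addr. rewrite (ri_sym y x).
  pose proof (CS x y). pose proof (hnorm_ge0 x); pose proof (hnorm_ge0 y).
  rewrite <- (sqrt_square (hnorm x + hnorm y)) by lra.
  apply sqrt_le_1_alt.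
  assert (hnorm x * hnorm x = ri x x) by (apply sqrt_sqrt, ri_ge0).
  assert (hnorm y * hnorm y = ri y y) by (apply sqrt_sqrt, ri_ge0).
  nra.
Qed.

Lemma vsub_swap {V : HilbertSpace} (x y : V) : vsub y x = vopp (vsub x y).
Proof. unfold vsub. rewrite vopp_add, vopp_opp, vaddC. reflexivity. Qed.

Lemma norm_sym {V : HilbertSpace} (x y : V) : hnorm (vsub x y) = hnorm (vsub y x).
Proof. rewrite (vsub_swap x y), norm_opp; reflexivity. Qed.

Lemma vsub_split {V : HilbertSpace} (a b c : V) : vsub a c = vadd (vsub a b) (vsub b c).
Proof. unfold vsub. rewrite <- vaddA, (vaddA _ (vopp b)), vaddNl, vadd0l. reflexivity. Qed.

Lemma vdist_tri {V : HilbertSpace} (a b c : V) : hnorm (vsub a c) <= hnorm (vsub a b) + hnorm (vsub b c).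
Proof. rewrite (vsub_split a b c). apply vtriangle. Qed.

Lemma norm_sub_le {V : HilbertSpace} (a b : V) : hnorm (vsub a b) <= hnorm a + hnorm b.
Proof. unfold vsub. rewrite <- (norm_opp b). apply vtriangle. Qed.


Lemma vsub_self {V : HilbertSpace} (a : V) : hnorm (vsub a a) = 0.
Proof. unfold vsub; rewrite vaddN; apply norm_zero. Qed.

Lemma half_pow_small eps : 0 < eps -> exists N, (1/2)^N < eps.
Proof.
  intro He. destruct (pow_lt_1_zero (1/2)) with (y := eps) as [N HN]; auto.
  rewrite Rabs_right; lra. exists N. specialize (HN N (le_n _)).
  rewrite Rabs_right in HN; auto. apply Rle_ge, pow_le; lra.
Qed.

Lemma baire {V : HilbertSpace} (P : nat -> V -> Prop) :
  (forall x, exists n, P n x) ->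
  exists n z r, 0 < r /\ forall w, hnorm (vsub w z) < r -> forall s, 0 < s ->
     exists x, hnorm (vsub x w) < s /\ P n x.
Proof.
  intro Hcov. apply NNPP; intro NE.
  assert (step : forall np : nat * (V * R), exists q : V * R, 0 < snd (snd np) ->
     0 < snd q /\ hnorm (vsub (fst q) (fst (snd np))) + 2 * snd q <= snd (snd np) /\
     forall x, hnorm (vsub x (fst q)) <= snd q -> ~ P (fst np) x).
  { intros [n [z r]]; simpl.
    destruct (Rlt_or_le 0 r) as [rp|rn]; [| exists (z,r); intro; simpl in *; lra].
    assert (NA : ~ (forall w, hnorm (vsub w z) < r -> forall s, 0 < s ->
       exists x, hnorm (vsub x w) < s /\ P n x)).
    { intro A; apply NE; exists n, z, r; auto. }
    apply not_all_ex_not in NA as [w NA]. apply imply_to_and in NA as [Hw NA].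
    apply not_all_ex_not in NA as [s NA]. apply imply_to_and in NA as [Hs NA].
    exists (w, Rmin (s/2) ((r - hnorm (vsub w z))/2)). intros _; simpl.
    assert (m1 : Rmin (s/2) ((r - hnorm (vsub w z))/2) <= s/2) by apply Rmin_l.
    assert (m2 : Rmin (s/2) ((r - hnorm (vsub w z))/2) <= (r - hnorm (vsub w z))/2) by apply Rmin_r.
    split; [apply Rmin_glb_lt; lra|]. split; [lra|].
    intros x Hx Px. apply NA. exists x; split; auto. lra. }
  apply functional_choice in step as [f Hf].
  set (c := fun k => nat_rect (fun _ => (V*R)%type) (vzero,1) (fun n p => f (n,p)) k).
  assert (cS : forall k, c (S k) = f (k, c k)) by reflexivity.
  assert (pos : forall k, 0 < snd (c k)).
  { induction k. simpl; lra. rewrite cS. apply (Hf (k, c k)); auto. }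
  assert (sp : forall k, hnorm (vsub (fst (c (S k))) (fst (c k))) + 2 * snd (c (S k)) <= snd (c k)
      /\ forall x, hnorm (vsub x (fst (c (S k)))) <= snd (c (S k)) -> ~ P k x).
  { intro k. rewrite cS. destruct (Hf (k, c k)) as [_ [A B]]; [apply pos|]. split; [exact A| exact B]. }
  assert (rad : forall k, snd (c k) <= (1/2)^k).
  { induction k. simpl; lra. destruct (sp k) as [A _]. pose proof (hnorm_ge0 (vsub (fst (c (S k))) (fst (c k)))).
    change ((1/2)^(S k)) with (1/2 * (1/2)^k). lra. }
  assert (nest : forall j m, hnorm (vsub (fst (c (m+j)%nat)) (fst (c m))) + snd (c (m+j)%nat) <= snd (c m)).
  { induction j; intro m. rewrite Nat.add_0_r, vsub_self; lra.
    rewrite Nat.add_succ_r. destruct (sp (m+j)%nat) as [A _]. specialize (IHj m).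
    pose proof (vdist_tri (fst (c (S (m+j)))) (fst (c (m+j)%nat)) (fst (c m))).
    pose proof (pos (S (m+j))). lra. }
  assert (nest' : forall n m, (m <= n)%nat -> hnorm (vsub (fst (c n)) (fst (c m))) <= (1/2)^m).
  { intros n m Hmn. replace n with (m + (n-m))%nat by lia. specialize (nest (n-m)%nat m).
    pose proof (pos (m + (n-m))%nat). pose proof (rad m). lra. }
  destruct (hcomplete V (fun k => fst (c k))) as [l Hl].
  { intros eps He. destruct (half_pow_small (eps/2)) as [N HN]; [lra|]. exists N.
    intros n m Hn Hm. change (hnorm (vsub (fst (c n)) (fst (c m))) < eps).
    pose proof (vdist_tri (fst (c n)) (fst (c N)) (fst (c m))).
    pose proof (nest' n N Hn). pose proof (nest' m N Hm). rewrite norm_sym in H1. lra. }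
  destruct (Hcov l) as [n Pn].
  destruct (sp n) as [_ B]. apply (B l); auto.
  apply Rle_plus_epsilon. intros e He.
  destruct (Hl e He) as [N HN]. specialize (HN (S n + N)%nat ltac:(lia)).
  change (hnorm (vsub (fst (c (S n + N)%nat)) l) < e) in HN.
  pose proof (vdist_tri l (fst (c (S n + N)%nat)) (fst (c (S n)))).
  rewrite norm_sym in HN. specialize (nest N (S n)). pose proof (pos (S n + N)%nat). lra.
Qed.

Lemma half_pow_dec n N : (N <= n)%nat -> (1/2)^n <= (1/2)^N.
Proof.
  intro h. replace n with (N + (n-N))%nat by lia. rewrite pow_add.
  assert (0 <= (1/2)^N) by (apply pow_le; lra).
  assert ((1/2)^(n-N) <= 1).
  { clear. induction (n-N)%nat. simpl; lra. simpl. assert (0 <= (1/2)^n0) by (apply pow_le; lra). lra. }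
  assert (0 <= (1/2)^(n-N)) by (apply pow_le; lra). nra.
Qed.

Lemma vopp_zero {V : HilbertSpace} : vopp (@vzero V) = vzero.
Proof. rewrite <- (vadd0l (vopp vzero)). apply vaddN. Qed.

Lemma vsub0 {V : HilbertSpace} (a : V) : vsub a vzero = a.
Proof. unfold vsub; rewrite vopp_zero; apply vadd0. Qed.

Lemma vsub_addr {V : HilbertSpace} (y s v : V) : vsub y (vadd s v) = vsub (vsub y s) v.
Proof. unfold vsub. rewrite vopp_add, vaddA. reflexivity. Qed.

Lemma vsub_addl {V : HilbertSpace} (a b c : V) : vsub (vadd a b) c = vadd (vsub a c) b.
Proof. unfold vsub. rewrite <- !vaddA. f_equal. apply vaddC. Qed.

Lemma rs_mul a b : Cmul (rs a) (rs b) = rs (a*b).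
Proof. unfold Cmul, rs; simpl; f_equal; ring. Qed.

Lemma vscal_sub {V : HilbertSpace} a (p q : V) :
  vscal (rs a) (vsub p q) = vsub (vscal (rs a) p) (vscal (rs a) q).
Proof. unfold vsub. rewrite vscalDv. f_equal. rewrite !vopp_scal, !vscalA. f_equal.
  unfold Cmul, rs, m1; simpl; f_equal; ring. Qed.

Lemma ident_d {V : HilbertSpace} (z u x1 x2 : V) :
  vsub u (vsub x1 x2) = vsub (vsub (vadd z u) x1) (vsub z x2).
Proof.
  unfold vsub. rewrite !vopp_add, !vopp_opp.
  rewrite <- (vaddA _ z u (vopp x1)). rewrite (vaddC _ z).
  rewrite <- (vaddA _ (vadd u (vopp x1)) z). rewrite (vaddA _ z (vopp z) x2), vaddN, vadd0l.
  rewrite vaddA. reflexivity.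
Qed.


Lemma Tadd {H K : HilbertSpace} (T : Op H K) (Tdom : forall x, dom T x) (Tlin : is_linop T) x y : app T (vadd x y) = vadd (app T x) (app T y).
Proof. destruct Tlin as [_ [A _]]. apply A; auto. Qed.
Lemma Tscal {H K : HilbertSpace} (T : Op H K) (Tdom : forall x, dom T x) (Tlin : is_linop T) a x : app T (vscal a x) = vscal a (app T x).
Proof. destruct Tlin as [_ [_ A]]. apply A; auto. Qed.
Lemma Tsub {H K : HilbertSpace} (T : Op H K) (Tdom : forall x, dom T x) (Tlin : is_linop T) x y : app T (vsub x y) = vsub (app T x) (app T y).
Proof. unfold vsub. rewrite (Tadd T Tdom Tlin), !vopp_scal, (Tscal T Tdom Tlin). reflexivity. Qed.
Lemma T0 {H K : HilbertSpace} (T : Op H K) (Tdom : forall x, dom T x) (Tlin : is_linop T) : app T vzero = vzero.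
Proof. rewrite <- (vscal_C0 (@vzero H)), (Tscal T Tdom Tlin). apply vscal_C0. Qed.

Lemma succ_approx {H K : HilbertSpace} (T : Op H K) (Tdom : forall x, dom T x)
  (Tlin : is_linop T) (Tcl : closed_op T) L : 0 <= L ->
  (forall y eps, 0 < eps -> exists v, hnorm (vsub y v) < eps /\ hnorm (app T v) <= L * hnorm y) ->
  forall y0 e, hnorm y0 < e -> hnorm (app T y0) <= 2 * L * e.
Proof.
  intros HL Hap y0 e Hy0.
  assert (He : 0 < e) by (pose proof (hnorm_ge0 y0); lra).
  assert (ch : forall p : H * nat, exists v, hnorm (vsub (fst p) v) < e * (1/2)^(S (snd p))
            /\ hnorm (app T v) <= L * hnorm (fst p)).
  { intros [y k]. apply Hap. apply Rmult_lt_0_compat; auto. apply pow_lt; lra. }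
  apply functional_choice in ch as [g Hg].
  set (S := fun k => nat_rect (fun _ => H) vzero (fun k s => vadd s (g (vsub y0 s, k))) k).
  assert (SS : forall k, S (Datatypes.S k) = vadd (S k) (g (vsub y0 (S k), k))) by reflexivity.
  assert (Rk : forall k, hnorm (vsub y0 (S k)) <= e * (1/2)^k).
  { induction k. simpl pow. change (S 0%nat) with (@vzero H). rewrite vsub0; lra.
    rewrite SS, vsub_addr. destruct (Hg (vsub y0 (S k), k)) as [A _]. cbn [fst snd] in A. change ((1/2)^(Datatypes.S k)) with (1/2*(1/2)^k) in *. lra. }
  assert (TV : forall k, hnorm (app T (g (vsub y0 (S k), k))) <= L * e * (1/2)^k).
  { intro k. destruct (Hg (vsub y0 (S k), k)) as [_ B]. cbn [fst snd] in B.
    specialize (Rk k). assert (L * hnorm (vsub y0 (S k)) <= L * (e * (1/2)^k))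
      by (apply Rmult_le_compat_l; auto). lra. }
  assert (TS : forall j m, hnorm (vsub (app T (S (m+j)%nat)) (app T (S m)))
                 <= 2 * L * e * ((1/2)^m - (1/2)^(m+j))).
  { induction j; intro m.
    - rewrite Nat.add_0_r, vsub_self. lra.
    - rewrite Nat.add_succ_r, SS, (Tadd T Tdom Tlin), vsub_addl.
      eapply Rle_trans; [apply vtriangle|].
      specialize (IHj m). specialize (TV (m+j)%nat).
      change ((1/2)^(Datatypes.S (m+j))) with (1/2 * (1/2)^(m+j)). lra. }
  assert (pw : forall k, 0 <= (1/2)^k) by (intro; apply pow_le; lra).
  assert (TS' : forall n m, (m <= n)%nat -> hnorm (vsub (app T (S n)) (app T (S m))) <= 2*L*e*(1/2)^m).
  { intros n m Hmn. replace n with (m + (n-m))%nat by lia. specialize (TS (n-m)%nat m).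
    specialize (pw (m + (n-m))%nat). assert (0 <= 2*L*e) by nra. nra. }
  destruct (hcomplete K (fun k => app T (S k))) as [l Hl].
  { intros eps Heps. destruct (half_pow_small (eps / (4*L*e+1))) as [N HN].
    { apply Rdiv_lt_0_compat; nra. }
    exists N. intros n m Hn Hm. change (hnorm (vsub (app T (S n)) (app T (S m))) < eps).
    pose proof (vdist_tri (app T (S n)) (app T (S N)) (app T (S m))).
    pose proof (TS' n N Hn). pose proof (TS' m N Hm). rewrite norm_sym in H2.
    assert ((4*L*e+1) * (1/2)^N < eps).
    { apply (Rmult_lt_compat_l (4*L*e+1)) in HN; [|nra].
      replace ((4 * L * e + 1) * (eps / (4 * L * e + 1))) with eps in HN by (field; nra). lra. }
    specialize (pw N). nra. }
  destruct (Tcl (fun k => S k) y0 l) as [_ Ty0]; auto.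
  { intros eps Heps. destruct (half_pow_small (eps / e)) as [N HN].
    { apply Rdiv_lt_0_compat; lra. }
    exists N. intros n Hn. rewrite norm_sym. eapply Rle_lt_trans; [apply Rk|].
    assert ((1/2)^n <= (1/2)^N) by (apply half_pow_dec; lia).
    apply (Rmult_lt_compat_l e) in HN; auto.
    replace (e * (eps/e)) with eps in HN by (field; lra). nra. }
  rewrite Ty0. apply Rle_plus_epsilon. intros eps Heps.
  destruct (Hl eps Heps) as [N HN]. specialize (HN N (le_n _)).
  change (hnorm (vsub (app T (S N)) l) < eps) in HN.
  pose proof (vdist_tri l (app T (S N)) vzero). rewrite !vsub0 in H0.
  pose proof (TS N 0%nat). simpl (0 + N)%nat in H1. change (S 0%nat) with (@vzero H) in H1.
  rewrite (T0 T Tdom Tlin), vsub0 in H1. rewrite norm_sym in HN.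
  specialize (pw N). simpl pow in H1. assert (0 <= 2*L*e*(1/2)^N) by (apply Rmult_le_pos; [nra|auto]). lra.
Qed.

Lemma dens {H K : HilbertSpace} (T : Op H K) (Tdom : forall x, dom T x)
  (Tlin : is_linop T) (N : R) z r : 0 < r ->
  (forall w, hnorm (vsub w z) < r -> forall s, 0 < s ->
     exists x, hnorm (vsub x w) < s /\ hnorm (app T x) <= N) ->
  forall y eps, 0 < eps -> exists v, hnorm (vsub y v) < eps /\
     hnorm (app T v) <= (4 * N / r) * hnorm y.
Proof.
  intros Hr D y eps Heps.
  assert (N0 : 0 <= N).
  { destruct (D z ltac:(rewrite vsub_self; lra) 1 ltac:(lra)) as [x [_ B]].
    pose proof (hnorm_ge0 (app T x)). lra. }
  destruct (Rle_lt_or_eq_dec 0 (hnorm y) (hnorm_ge0 y)) as [yp|y0].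
  2:{ exists vzero. rewrite vsub0, <- y0, (T0 T Tdom Tlin), norm_zero. split; [lra|]. lra. }
  set (c := r / (2 * hnorm y)).
  assert (cp : 0 < c) by (unfold c; apply Rdiv_lt_0_compat; lra).
  set (u := vscal (rs c) y).
  assert (nu : hnorm u = r/2).
  { unfold u. rewrite norm_scal, Rabs_right by lra. unfold c. field. lra. }
  assert (e1 : hnorm (vsub (vadd z u) z) < r).
  { rewrite vsub_addl. unfold vsub at 1. rewrite vaddN, vadd0l. lra. }
  destruct (D _ e1 (c*eps/2) ltac:(nra)) as [x1 [A1 B1]].
  destruct (D z ltac:(rewrite vsub_self; lra) (c*eps/2) ltac:(nra)) as [x2 [A2 B2]].
  exists (vscal (rs (1/c)) (vsub x1 x2)).
  assert (ey : y = vscal (rs (1/c)) u).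
  { unfold u. rewrite vscalA, rs_mul. replace (1/c*c) with 1 by (field; lra).
    symmetry; apply vscal1. }
  assert (ac : Rabs (1/c) = 1/c) by (apply Rabs_right; apply Rle_ge, Rlt_le, Rdiv_lt_0_compat; lra).
  split.
  - rewrite ey at 1. rewrite <- vscal_sub, norm_scal, ac, (ident_d z).
    pose proof (norm_sub_le (vsub (vadd z u) x1) (vsub z x2)).
    rewrite (norm_sym (vadd z u)), (norm_sym z) in H0.
    apply (Rmult_lt_reg_l c); auto. replace (c * (1/c * hnorm (vsub (vsub (vadd z u) x1) (vsub z x2))))
      with (hnorm (vsub (vsub (vadd z u) x1) (vsub z x2))) by (field; lra). lra.
  - rewrite (Tscal T Tdom Tlin), norm_scal, ac, (Tsub T Tdom Tlin).
    pose proof (norm_sub_le (app T x1) (app T x2)).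
    replace (4 * N / r * hnorm y) with (1/c * (2*N)) by (unfold c; field; lra).
    apply Rmult_le_compat_l. apply Rlt_le, Rdiv_lt_0_compat; lra. lra.
Qed.

Theorem proposition3p17 (H K : HilbertSpace) (A : Op H H) (B : Op K K) (T : Op H K) :
  densely_defined A -> densely_defined B ->
  quasi_similar_via T A B ->
  (exists lam : Cplx, in_resolvent A lam) ->
  everywhere_defined T /\ bounded_op T.
Proof.
  intros _ _ [[Tcl [[Tlin _] [io0 _]]] _] [lam [_ [Rl [HR _]]]].
  assert (Tdom : forall x, dom T x).
  { intro x. destruct (HR x) as [DA E]. destruct (io0 _ DA) as [D1 D2].
    rewrite <- E. unfold vsub. rewrite vopp_scal.
    destruct Tlin as [_ [Ladd Lsc]].
    apply Ladd; auto. apply Lsc. apply Lsc. auto. }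
  split; [exact Tdom|].
  destruct (baire (fun n x => hnorm (app T x) <= INR n)) as [n [z [r [Hr D]]]].
  { intro x. destruct (INR_archimed 1 (hnorm (app T x))) as [n Hn]; [lra|].
    exists n. lra. }
  pose proof (dens T Tdom Tlin (INR n) z r Hr D) as Hap.
  assert (L0 : 0 <= 4 * INR n / r).
  { apply Rmult_le_pos; [pose proof (pos_INR n); lra| apply Rlt_le, Rinv_0_lt_compat; lra]. }
  exists (2 * (4 * INR n / r)). intros x _.
  apply Rle_plus_epsilon. intros eps Heps.
  set (L := 4 * INR n / r) in *.
  assert (hnorm (app T x) <= 2 * L * (hnorm x + eps / (2*L+1))).
  { apply (succ_approx T Tdom Tlin Tcl L L0 Hap).
    assert (0 < eps / (2*L+1)) by (apply Rdiv_lt_0_compat; lra). lra. }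
  assert (2 * L * (eps / (2*L+1)) <= eps).
  { replace (2 * L * (eps / (2*L+1))) with (eps * (2*L / (2*L+1))) by (field; lra).
    assert (2*L/(2*L+1) <= 1).
    { apply (Rmult_le_reg_r (2*L+1)); [lra|]. replace (2*L/(2*L+1)*(2*L+1)) with (2*L) by (field; lra). lra. }
    nra. }
  nra.
Qed.
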